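(* Let $K\ge2$ and $\alpha\in\mathbb{R}$. The function $-S_\alpha$ is $C_{\alpha,K}$-strongly convex with respect to $\|\cdot\|_1$ on $\operatorname{relint}(\Delta^K)$, i.e. for all $p,q\in\operatorname{relint}(\Delta^K)$, \[ -S_\alpha(p)\ \ge\ -S_\alpha(q)+\langle\nabla(-S_\alpha)(q),p-q\rangle+\frac{C_{\alpha,K}}{2}\|p-q\|_1^2, \] and $C_{\alpha,K}$ is the largest constant for which this holds. Here $C_{\alpha,K}=2^{1-\alpha}$ if $\alpha\le 1$; $C_{\alpha,K}=K^{1-\alpha}$ if $\alpha\in(1,2]$ and $K$ even; $C_{\alpha,K}=K^{1-\alpha}\left(\frac{(1-\frac1K)^{\frac{1-\alpha}{3-\alpha}}+(1+\frac1K)^{\frac{1-\alpha}{3-\alpha}}}{2}\right)^{3-\alpha}$ if $\alpha\in(1,2]$ and $K$ odd; $C_{\alpha,K}=2^{1-\max\{\alpha,3\}}$ if $\alpha>2$ and $K=2$; and $C_{\alpha,K}=0$ if $\alpha>2$ and $K\ge3$.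
   Context: $\Delta^K=\{p\in[0,1]^K:\sum_k p_k=1\}$, $\operatorname{relint}(\Delta^K)=\Delta^K\cap(0,1)^K$. For $p\in(0,+\infty)^K$: $S_\alpha(p)=\frac{\sum_k p_k^\alpha}{\alpha(1-\alpha)}$ if $\alpha\notin\{0,1\}$, $S_0(p)=\sum_k\ln p_k$, $S_1(p)=-\sum_k p_k\ln p_k$. $\|x\|_1=\sum_k|x_k|$. *)

(* Defs.v *)
From Stdlib Require Import Reals Lra Lia Arith.
From Coquelicot Require Import Coquelicot.
Open Scope R_scope.

(* Vectors in R^K are represented as functions nat -> R; only the
   coordinates 0 .. K-1 are ever used. *)

Fixpoint sumK (n : nat) (f : nat -> R) : R :=
  match n with
  | O => 0
  | S m => sumK m f + f m
  end.

Definition in_relint (K : nat) (p : nat -> R) : Prop :=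
  (forall k, (k < K)%nat -> 0 < p k < 1) /\ sumK K p = 1.

Definition S_alpha (alpha : R) (K : nat) (p : nat -> R) : R :=
  if Req_EM_T alpha 0 then sumK K (fun k => ln (p k))
  else if Req_EM_T alpha 1 then - sumK K (fun k => p k * ln (p k))
  else sumK K (fun k => Rpower (p k) alpha) / (alpha * (1 - alpha)).

Definition upd (q : nat -> R) (k : nat) (t : R) : nat -> R :=
  fun j => if Nat.eqb j k then t else q j.

Definition partial (F : (nat -> R) -> R) (q : nat -> R) (k : nat) : R :=
  Derive (fun t => F (upd q k t)) (q k).

Definition grad_dot (K : nat) (F : (nat -> R) -> R) (q x : nat -> R) : R :=
  sumK K (fun k => partial F q k * x k).

Definition norm1 (K : nat) (x : nat -> R) : R := sumK K (fun k => Rabs (x k)).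

Definition negS_strongly_convex (alpha : R) (K : nat) (C : R) : Prop :=
  forall p q : nat -> R, in_relint K p -> in_relint K q ->
    - S_alpha alpha K p >=
      - S_alpha alpha K q
      + grad_dot K (fun r => - S_alpha alpha K r) q (fun k => p k - q k)
      + C / 2 * (norm1 K (fun k => p k - q k)) ^ 2.

Definition C_const (alpha : R) (K : nat) : R :=
  if Rle_dec alpha 1 then Rpower 2 (1 - alpha)
  else if Rle_dec alpha 2 then
    (if Nat.even K then Rpower (INR K) (1 - alpha)
     else
       let e := (1 - alpha) / (3 - alpha) in
       Rpower (INR K) (1 - alpha) *
       Rpower ((Rpower (1 - 1 / INR K) e + Rpower (1 + 1 / INR K) e) / 2)
              (3 - alpha))
  else if Nat.eqb K 2 then Rpower 2 (1 - Rmax alpha 3)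
  else 0.

(* Main.v *)
Require Import Defs.
From Stdlib Require Import Reals Lra Lia.
From Coquelicot Require Import Coquelicot.
Open Scope R_scope.

Lemma isd_plus (f g : R -> R) (x a b : R) : is_derive f x a -> is_derive g x b ->
  is_derive (fun t => f t + g t) x (a + b).
Proof. intros; exact (is_derive_plus f g x a b H H0). Qed.
Lemma isd_mult (f g : R -> R) (x a b : R) : is_derive f x a -> is_derive g x b ->
  is_derive (fun t => f t * g t) x (a * g x + f x * b).
Proof. intros; exact (is_derive_mult f g x a b H H0 Rmult_comm). Qed.
Lemma isd_const (c x : R) : is_derive (fun _ : R => c) x 0.
Proof. exact (is_derive_const c x). Qed.
Lemma isd_id (x : R) : is_derive (fun t : R => t) x 1.
Proof. exact (is_derive_id x). Qed.
Lemma isd_comp (f g : R -> R) (x a b : R) : is_derive f (g x) a -> is_derive g x b ->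
  is_derive (fun t => f (g t)) x (b * a).
Proof. intros; exact (is_derive_comp f g x a b H H0). Qed.
Lemma isd_ext (f g : R -> R) (x a b : R) : (forall t, f t = g t) -> a = b -> is_derive f x a -> is_derive g x b.
Proof. intros H1 H2 H3; subst; exact (is_derive_ext f g x b H1 H3). Qed.

Lemma isd_pow (p x : R) : 0 < x -> is_derive (fun t => Rpower t p) x (p * Rpower x (p - 1)).
Proof. intros; apply is_derive_Reals, derivable_pt_lim_power; auto. Qed.

Lemma isd_cont (f : R -> R) (x l : R) : is_derive f x l -> continuity_pt f x.
Proof. intros H; apply continuity_pt_filterlim; apply (ex_derive_continuous (K:=R_AbsRing) (V:=R_NormedModule) f x); exists l; exact H. Qed.

Lemma mono_deriv (f df : R -> R) (a b : R) : a <= b ->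
  (forall y, a <= y <= b -> is_derive f y (df y)) ->
  (forall y, a <= y <= b -> 0 <= df y) -> f a <= f b.
Proof.
  intros Hab Hd Hp.
  destruct (MVT_gen f a b df) as [c [Hc Heq]].
  - intros y Hy. rewrite Rmin_left in Hy by lra. rewrite Rmax_right in Hy by lra.
    apply Hd; lra.
  - intros y Hy. rewrite Rmin_left in Hy by lra. rewrite Rmax_right in Hy by lra.
    eapply isd_cont; apply Hd; lra.
  - rewrite Rmin_left in Hc by lra. rewrite Rmax_right in Hc by lra.
    assert (0 <= df c * (b - a)) by (apply Rmult_le_pos; [apply Hp; lra | lra]). lra.
Qed.

Lemma convex_tangent (f df ddf : R -> R) (a b : R) :
  (forall y, Rmin a b <= y <= Rmax a b -> is_derive f y (df y) /\ is_derive df y (ddf y) /\ 0 <= ddf y) ->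
  f a + df a * (b - a) <= f b.
Proof.
  intros H.
  destruct (Rle_dec a b) as [Hab|Hab].
  - rewrite Rmin_left in H by lra. rewrite Rmax_right in H by lra.
    set (h t := f t - f a - df a * (t - a)).
    assert (h a <= h b).
    { apply (mono_deriv h (fun t => df t - df a)); auto.
      - intros y Hy. unfold h. eapply isd_ext with (f := fun t => f t + (-1) * (f a + df a * (t - a))).
        + intros; ring.
        + reflexivity.
        + eapply isd_ext; [intros; reflexivity | | apply isd_plus; [apply (H y Hy) | apply is_derive_scal;
            apply isd_plus; [apply isd_const | apply is_derive_scal; apply isd_plus; [apply isd_id| apply isd_const]]]].
          ring.
      - intros y Hy. assert (df a <= df y).
        { apply (mono_deriv df ddf a y); try lra; intros z Hz; apply H; lra. }
        lra. }
    unfold h in H0. lra.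
  - rewrite Rmin_right in H by lra. rewrite Rmax_left in H by lra.
    set (h t := - (f t - f a - df a * (t - a))).
    assert (h b <= h a).
    { apply (mono_deriv h (fun t => df a - df t)); try lra.
      - intros y Hy. unfold h. eapply isd_ext with (f := fun t => (-1) * f t + (f a + df a * (t - a))).
        + intros; ring.
        + reflexivity.
        + eapply isd_ext; [intros; reflexivity | | apply isd_plus; [apply is_derive_scal; apply (H y Hy) |
            apply isd_plus; [apply isd_const | apply is_derive_scal; apply isd_plus; [apply isd_id| apply isd_const]]]].
          ring.
      - intros y Hy. assert (df y <= df a).
        { apply (mono_deriv df ddf y a); try lra; intros z Hz; apply H; lra. }
        lra. }
    unfold h in H0. lra.
Qed.

Lemma Rpower_pos x p : 0 < Rpower x p.
Proof. unfold Rpower; apply exp_pos. Qed.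

Lemma pow_convex p S t : (p <= 0 \/ 1 <= p) -> 0 < S -> 0 < t ->
  Rpower S p + p * Rpower S (p - 1) * (t - S) <= Rpower t p.
Proof.
  intros Hp HS Ht.
  apply (convex_tangent (fun y => Rpower y p) (fun y => p * Rpower y (p-1))
          (fun y => p * ((p - 1) * Rpower y (p - 1 - 1))) S t).
  intros y Hy. assert (0 < y) by (destruct (Rle_dec S t); [rewrite Rmin_left in Hy|rewrite Rmin_right in Hy]; lra).
  split; [apply isd_pow; auto|split].
  - apply is_derive_scal, isd_pow; auto.
  - pose proof (Rpower_pos y (p-1-1)). rewrite <- Rmult_assoc.
    apply Rmult_le_pos; [|lra]. destruct Hp.
    + replace (p * (p-1)) with ((-p) * (1 - p)) by ring. apply Rmult_le_pos; lra.
    + apply Rmult_le_pos; lra.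
Qed.

Lemma pow_concave p S t : 0 <= p <= 1 -> 0 < S -> 0 < t ->
  Rpower t p <= Rpower S p + p * Rpower S (p - 1) * (t - S).
Proof.
  intros Hp HS Ht.
  assert (H := convex_tangent (fun y => - Rpower y p) (fun y => - (p * Rpower y (p-1)))
          (fun y => - (p * ((p - 1) * Rpower y (p - 1 - 1)))) S t).
  cut (- Rpower S p + - (p * Rpower S (p - 1)) * (t - S) <= - Rpower t p). lra.
  apply H.
  intros y Hy. assert (0 < y) by (destruct (Rle_dec S t); [rewrite Rmin_left in Hy|rewrite Rmin_right in Hy]; lra).
  split; [|split].
  - eapply (isd_ext (fun y => (-1) * Rpower y p)); [intros; ring| |apply is_derive_scal; apply isd_pow; auto].
    ring.
  - eapply (isd_ext (fun y => (-1) * (p * Rpower y (p-1)))); [intros; ring| |apply is_derive_scal; apply is_derive_scal, isd_pow; auto].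
    ring.
  - pose proof (Rpower_pos y (p-1-1)). 
    assert (0 <= p * (1 - p) * Rpower y (p-1-1)) by (apply Rmult_le_pos; [apply Rmult_le_pos; lra|lra]).
    replace (- (p * ((p - 1) * Rpower y (p - 1 - 1)))) with (p * (1 - p) * Rpower y (p-1-1)) by ring. lra.
Qed.

Lemma sumK_ext n f g : (forall k, (k < n)%nat -> f k = g k) -> sumK n f = sumK n g.
Proof. induction n ; cbn [sumK]; intros; auto. rewrite IHn by (intros; apply H; lia). rewrite (H n) by lia. auto. Qed.
Lemma sumK_plus n f g : sumK n (fun k => f k + g k) = sumK n f + sumK n g.
Proof. induction n ; cbn [sumK]; auto. lra. rewrite IHn; ring. Qed.
Lemma sumK_scal n c f : sumK n (fun k => c * f k) = c * sumK n f.
Proof. induction n ; cbn [sumK]; auto. ring. rewrite IHn; ring. Qed.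
Lemma sumK_opp n f : sumK n (fun k => - f k) = - sumK n f.
Proof. induction n ; cbn [sumK]; auto. ring. rewrite IHn; ring. Qed.
Lemma sumK_le n f g : (forall k, (k < n)%nat -> f k <= g k) -> sumK n f <= sumK n g.
Proof. induction n ; cbn [sumK]; intros; [lra|]. pose proof (H n ltac:(lia)). pose proof (IHn ltac:(intros; apply H; lia)). lra. Qed.
Lemma sumK_const n c : sumK n (fun _ => c) = INR n * c.
Proof. induction n; cbn [sumK]. rewrite Rmult_0_l; reflexivity. rewrite IHn, S_INR; ring. Qed.
Lemma sumK_nonneg n f : (forall k, (k < n)%nat -> 0 <= f k) -> 0 <= sumK n f.
Proof. intros. replace 0 with (sumK n (fun _ => 0)) by (rewrite sumK_const; ring). apply sumK_le; auto. Qed.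
Lemma sumK_div n f c : sumK n (fun k => f k / c) = sumK n f / c.
Proof. unfold Rdiv. rewrite <- (Rmult_comm (/c)), <- sumK_scal. apply sumK_ext; intros; ring. Qed.

Lemma isd_sumK n (f : nat -> R -> R) df x :
  (forall k, (k < n)%nat -> is_derive (f k) x (df k)) ->
  is_derive (fun t => sumK n (fun k => f k t)) x (sumK n df).
Proof.
  induction n; intros H; cbn [sumK].
  - apply isd_const.
  - apply isd_plus. apply IHn; intros; apply H; lia. apply H; lia.
Qed.

Definition phi a t := if Req_EM_T a 0 then - ln t else if Req_EM_T a 1 then t * ln t
  else - (Rpower t a / (a * (1 - a))).
Definition phi1 a t := if Req_EM_T a 0 then - / t else if Req_EM_T a 1 then ln t + 1
  else - (Rpower t (a - 1) / (1 - a)).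

Lemma negS_eq a K r : - S_alpha a K r = sumK K (fun k => phi a (r k)).
Proof.
  unfold S_alpha, phi. destruct (Req_EM_T a 0).
  - rewrite <- sumK_opp; auto.
  - destruct (Req_EM_T a 1).
    + rewrite Ropp_involutive; apply sumK_ext; intros; auto.
    + rewrite <- sumK_div, <- sumK_opp; auto.
Qed.

Lemma Rpower_m1 t : 0 < t -> Rpower t (-1) = / t.
Proof. intros. replace (-1) with (- (1)) by ring. rewrite Rpower_Ropp, Rpower_1; auto. Qed.
Lemma Rpower_m2 t : 0 < t -> Rpower t (-2) = / (t ^ 2).
Proof. intros. replace (-2) with (- (1 + 1)) by ring. rewrite Rpower_Ropp.
  rewrite Rpower_plus, Rpower_1 by auto. f_equal; ring. Qed.

Lemma phi_d a t : 0 < t -> is_derive (phi a) t (phi1 a t).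
Proof.
  intros Ht. unfold phi, phi1. destruct (Req_EM_T a 0).
  - eapply (isd_ext (fun y => (-1) * ln y)); [intros; ring| |apply is_derive_scal; apply is_derive_ln; auto]. ring.
  - destruct (Req_EM_T a 1).
    + eapply isd_ext; [intros; reflexivity| |apply isd_mult; [apply isd_id|apply is_derive_ln; auto]].
      cbv beta; field; lra.
    + eapply isd_ext with (f := fun y => (-1/(a*(1-a))) * Rpower y a);
        [intros; unfold Rdiv; ring| |apply is_derive_scal, isd_pow; auto].
      field. split; auto. intro; apply n0; lra.
Qed.

Lemma phi1_d a t : 0 < t -> is_derive (phi1 a) t (Rpower t (a - 2)).
Proof.
  intros Ht. unfold phi1. destruct (Req_EM_T a 0).
  - subst. replace (0 - 2) with (-2) by ring. rewrite Rpower_m2 by auto.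
    eapply (isd_ext (fun y => (-1) * / y)); [intros; ring| |apply is_derive_scal; apply (is_derive_inv (fun y => y)); [apply isd_id|lra]].
    field; lra.
  - destruct (Req_EM_T a 1).
    + subst. replace (1 - 2) with (-1) by ring. rewrite Rpower_m1 by auto.
      eapply isd_ext; [intros; reflexivity| |apply isd_plus; [apply is_derive_ln; auto|apply isd_const]]. ring.
    + eapply isd_ext with (f := fun y => (-1/(1-a)) * Rpower y (a-1));
        [intros; unfold Rdiv; ring| |apply is_derive_scal, isd_pow; auto].
      replace (a - 1 - 1) with (a - 2) by ring. field. intro; apply n0; lra.
Qed.

Lemma isd_upd a q k t0 n : 0 < t0 ->
  is_derive (fun t => sumK n (fun j => phi a (upd q k t j))) t0 (if Nat.ltb k n then phi1 a t0 else 0).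
Proof.
  intros Ht. induction n as [|n IHn]; cbn [sumK].
  - apply isd_const.
  - destruct (Nat.eqb n k) eqn:E.
    + apply Nat.eqb_eq in E; subst k.
      replace (Nat.ltb n (S n)) with true by (symmetry; apply Nat.ltb_lt; lia).
      replace (Nat.ltb n n) with false in IHn by (symmetry; apply Nat.ltb_ge; lia).
      apply (isd_ext (fun t => sumK n (fun j => phi a (upd q n t j)) + phi a t) _ _ (0 + phi1 a t0)).
      * intros t. unfold upd at 3. rewrite Nat.eqb_refl. reflexivity.
      * ring.
      * apply isd_plus; [exact IHn| apply phi_d; auto].
    + apply (isd_ext (fun t => sumK n (fun j => phi a (upd q k t j)) + phi a (q n)) _ _ ((if Nat.ltb k n then phi1 a t0 else 0) + 0)).
      * intros t. unfold upd at 3. rewrite E. reflexivity.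
      * apply Nat.eqb_neq in E. rewrite Rplus_0_r.
        destruct (Nat.ltb k n) eqn:E2; symmetry.
        apply Nat.ltb_lt in E2. replace (Nat.ltb k (S n)) with true. auto. symmetry; apply Nat.ltb_lt; lia.
        apply Nat.ltb_ge in E2. replace (Nat.ltb k (S n)) with false. auto. symmetry; apply Nat.ltb_ge; lia.
      * apply isd_plus; [exact IHn| apply isd_const].
Qed.

Lemma upd_same q k : forall j, upd q k (q k) j = q j.
Proof. intros j; unfold upd. destruct (Nat.eqb j k) eqn:E; auto. apply Nat.eqb_eq in E; subst; auto. Qed.

Lemma partial_eq a K q k : (k < K)%nat -> 0 < q k ->
  partial (fun r => - S_alpha a K r) q k = phi1 a (q k).
Proof.
  intros Hk Hq. unfold partial.
  rewrite (Derive_ext _ (fun t => sumK K (fun j => phi a (upd q k t j)))) by (intros; apply negS_eq).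
  apply is_derive_unique.
  pose proof (isd_upd a q k (q k) K Hq) as H.
  replace (Nat.ltb k K) with true in H by (symmetry; apply Nat.ltb_lt; lia). exact H.
Qed.

Lemma grad_eq a K q x : (forall k, (k < K)%nat -> 0 < q k) ->
  grad_dot K (fun r => - S_alpha a K r) q x = sumK K (fun k => phi1 a (q k) * x k).
Proof. intros H. unfold grad_dot. apply sumK_ext; intros. rewrite partial_eq; auto. Qed.

Definition Qf a K (r x : nat -> R) := sumK K (fun k => Rpower (r k) (a - 2) * x k ^ 2).

Definition gseg a K (q x : nat -> R) s := sumK K (fun k => phi a (q k + s * x k)).
Definition gseg1 a K (q x : nat -> R) s := sumK K (fun k => phi1 a (q k + s * x k) * x k).

Lemma isd_affine (c d s : R) : is_derive (fun t => c + t * d) s d.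
Proof.
  apply (isd_ext (fun t => c + t * d) _ _ (0 + (1 * d + s * 0))); [intros; reflexivity|ring|].
  apply isd_plus; [apply isd_const|apply (isd_mult (fun t => t) (fun _ => d)); [apply isd_id|apply isd_const]].
Qed.

Lemma gseg_d a K q x s : (forall k, (k < K)%nat -> 0 < q k + s * x k) ->
  is_derive (gseg a K q x) s (gseg1 a K q x s).
Proof.
  intros H. unfold gseg, gseg1. apply isd_sumK. intros k Hk.
  apply (isd_ext (fun t => phi a (q k + t * x k)) _ _ (x k * phi1 a (q k + s * x k))); [intros; reflexivity|ring|].
  apply (isd_comp (phi a) (fun t => q k + t * x k)). apply phi_d, H; auto. apply isd_affine.
Qed.

Lemma gseg1_d a K q x s : (forall k, (k < K)%nat -> 0 < q k + s * x k) ->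
  is_derive (gseg1 a K q x) s (Qf a K (fun k => q k + s * x k) x).
Proof.
  intros H. unfold gseg1, Qf. apply isd_sumK. intros k Hk.
  apply (isd_ext (fun t => phi1 a (q k + t * x k) * x k) _ _ ((x k * Rpower (q k + s * x k) (a - 2)) * x k + phi1 a (q k + s * x k) * 0)); [intros; reflexivity|ring|].
  apply (isd_mult (fun t => phi1 a (q k + t * x k)) (fun _ => x k)); [|apply isd_const].
  apply (isd_comp (phi1 a) (fun t => q k + t * x k)). apply phi1_d, H; auto. apply isd_affine.
Qed.

Ltac rring := cbv beta; match goal with |- ?a = ?b => change (@eq R a b) end; first [ring | field].

Lemma seg_pos (q x : nat -> R) k s : 0 < q k -> 0 < q k + x k -> 0 <= s <= 1 -> 0 < q k + s * x k.
Proof.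
  intros H1 H2 Hs. replace (q k + s * x k) with ((1 - s) * q k + s * (q k + x k)) by ring.
  destruct (Rle_lt_dec s (1/2)).
  - assert (0 < (1 - s) * q k) by (apply Rmult_lt_0_compat; lra).
    assert (0 <= s * (q k + x k)) by (apply Rmult_le_pos; lra). lra.
  - assert (0 <= (1 - s) * q k) by (apply Rmult_le_pos; lra).
    assert (0 < s * (q k + x k)) by (apply Rmult_lt_0_compat; lra). lra.
Qed.

Lemma seg_lower a K q x M :
  (forall k, (k < K)%nat -> 0 < q k /\ 0 < q k + x k) ->
  (forall s, 0 <= s <= 1 -> M <= Qf a K (fun k => q k + s * x k) x) ->
  gseg a K q x 0 + gseg1 a K q x 0 * 1 + M / 2 <= gseg a K q x 1.
Proof.
  intros Hpos HM.
  pose proof (convex_tangent (fun s => gseg a K q x s - M / 2 * s ^ 2) (fun s => gseg1 a K q x s - M * s)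
     (fun s => Qf a K (fun k => q k + s * x k) x - M) 0 1) as H.
  rewrite Rmin_left, Rmax_right in H by lra.
  cut (gseg a K q x 0 - M / 2 * 0 ^ 2 + (gseg1 a K q x 0 - M * 0) * (1 - 0) <= gseg a K q x 1 - M / 2 * 1 ^ 2).
  { intros; lra. }
  apply H. intros y Hy.
  assert (Hp : forall k, (k < K)%nat -> 0 < q k + y * x k) by (intros k Hk; destruct (Hpos k Hk); apply seg_pos; auto).
  split; [|split].
  - apply (isd_ext (fun s => gseg a K q x s + (- (M/2)) * (s * s)) _ _ (gseg1 a K q x y + (-(M/2)) * (1 * y + y * 1))); [intros; rring|rring|].
    apply isd_plus. apply gseg_d; auto. apply is_derive_scal. apply (isd_mult (fun t => t) (fun t => t)); apply isd_id.
  - apply (isd_ext (fun s => gseg1 a K q x s + (- M) * s) _ _ (Qf a K (fun k => q k + y * x k) x + (-M) * 1)); [intros; rring|rring|].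
    apply isd_plus. apply gseg1_d; auto. apply is_derive_scal. apply isd_id.
  - pose proof (HM y Hy); lra.
Qed.

Lemma seg_upper a K q x L :
  (forall k, (k < K)%nat -> 0 < q k /\ 0 < q k + x k) ->
  (forall s, 0 <= s <= 1 -> Qf a K (fun k => q k + s * x k) x <= L) ->
  gseg a K q x 1 <= gseg a K q x 0 + gseg1 a K q x 0 * 1 + L / 2.
Proof.
  intros Hpos HM.
  pose proof (convex_tangent (fun s => L / 2 * s ^ 2 - gseg a K q x s) (fun s => L * s - gseg1 a K q x s)
     (fun s => L - Qf a K (fun k => q k + s * x k) x) 0 1) as H.
  rewrite Rmin_left, Rmax_right in H by lra.
  cut (L / 2 * 0 ^ 2 - gseg a K q x 0 + (L * 0 - gseg1 a K q x 0) * (1 - 0) <= L / 2 * 1 ^ 2 - gseg a K q x 1).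
  { intros; lra. }
  apply H. intros y Hy.
  assert (Hp : forall k, (k < K)%nat -> 0 < q k + y * x k) by (intros k Hk; destruct (Hpos k Hk); apply seg_pos; auto).
  split; [|split].
  - apply (isd_ext (fun s => (L/2) * (s * s) + (-1) * gseg a K q x s) _ _ ((L/2) * (1 * y + y * 1) + (-1) * gseg1 a K q x y)); [intros; rring|rring|].
    apply isd_plus. apply is_derive_scal. apply (isd_mult (fun t => t) (fun t => t)); apply isd_id.
    apply is_derive_scal. apply gseg_d; auto.
  - apply (isd_ext (fun s => L * s + (-1) * gseg1 a K q x s) _ _ (L * 1 + (-1) * Qf a K (fun k => q k + y * x k) x)); [intros; rring|rring|].
    apply isd_plus. apply is_derive_scal. apply isd_id. apply is_derive_scal. apply gseg1_d; auto.
  - pose proof (HM y Hy); lra.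
Qed.

Lemma breg_eq a K p q : (forall k, (k < K)%nat -> 0 < q k) ->
  let x := fun k => p k - q k in
  - S_alpha a K p = gseg a K q x 1 /\ - S_alpha a K q = gseg a K q x 0 /\
  grad_dot K (fun r => - S_alpha a K r) q x = gseg1 a K q x 0 * 1.
Proof.
  intros Hq x. rewrite !negS_eq, grad_eq by auto. unfold gseg, gseg1, x. split; [|split].
  - apply sumK_ext; intros. f_equal. ring.
  - apply sumK_ext; intros. f_equal. ring.
  - rewrite Rmult_1_r. apply sumK_ext; intros. f_equal. f_equal. ring.
Qed.

Definition QF a K C := forall r x : nat -> R, (forall k, (k < K)%nat -> 0 < r k) ->
  sumK K r = 1 -> sumK K x = 0 -> C * norm1 K x ^ 2 <= Qf a K r x.

Lemma lower_from_QF a K C : QF a K C -> negS_strongly_convex a K C.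
Proof.
  intros HQ p q [Hp Sp] [Hq Sq].
  destruct (breg_eq a K p q) as [E1 [E2 E3]]; [intros k Hk; apply Hq; auto|].
  rewrite E1, E2, E3. apply Rle_ge.
  set (x := fun k => p k - q k).
  assert (Sx : sumK K x = 0) by (unfold x; rewrite (sumK_ext K _ (fun k => p k + (-1) * q k)) by (intros; ring);
     rewrite sumK_plus, sumK_scal, Sp, Sq; ring).
  pose proof (seg_lower a K q x (C * norm1 K x ^ 2)) as H.
  replace (C / 2 * norm1 K x ^ 2) with (C * norm1 K x ^ 2 / 2) by field.
  apply H.
  - intros k Hk. unfold x. split. apply Hq; auto. replace (q k + (p k - q k)) with (p k) by ring. apply Hp; auto.
  - intros s Hs. apply HQ.
    + intros k Hk. apply seg_pos. apply Hq; auto. unfold x; replace (q k + (p k - q k)) with (p k) by ring; apply Hp; auto. auto.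
    + rewrite sumK_plus, sumK_scal, Sq, Sx. ring.
    + auto.
Qed.

Lemma upper_from_SC a K C q p L : negS_strongly_convex a K C -> in_relint K q -> in_relint K p ->
  (forall s, 0 <= s <= 1 -> Qf a K (fun k => q k + s * (p k - q k)) (fun k => p k - q k) <= L) ->
  C * norm1 K (fun k => p k - q k) ^ 2 <= L.
Proof.
  intros HS Hq Hp HL.
  pose proof (HS p q Hp Hq) as H.
  destruct (breg_eq a K p q) as [E1 [E2 E3]]; [intros k Hk; apply Hq; auto|].
  rewrite E1, E2, E3 in H.
  pose proof (seg_upper a K q (fun k => p k - q k) L) as H2.
  assert (gseg a K q (fun k => p k - q k) 1 <= gseg a K q (fun k => p k - q k) 0 + gseg1 a K q (fun k => p k - q k) 0 * 1 + L / 2).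
  { apply H2; auto. intros k Hk; split. apply Hq; auto. replace (q k + (p k - q k)) with (p k) by ring. apply Hp; auto. }
  lra.
Qed.

Lemma Rpower_2 x : 0 < x -> Rpower x 2 = x * x.
Proof. intros. replace 2 with (1 + 1) by ring. rewrite Rpower_plus, Rpower_1; auto. Qed.

Lemma INR_pos n : (1 <= n)%nat -> 0 < INR n.
Proof. intros; apply lt_0_INR; lia. Qed.

Lemma C_le1 a K : a <= 1 -> C_const a K = Rpower 2 (1 - a).
Proof. intros; unfold C_const; destruct (Rle_dec a 1); [auto|lra]. Qed.

Lemma C_K3 a K : 2 < a -> (3 <= K)%nat -> C_const a K = 0.
Proof.
  intros; unfold C_const; destruct (Rle_dec a 1); [lra|]. destruct (Rle_dec a 2); [lra|].
  destruct (Nat.eqb K 2) eqn:E; auto. apply Nat.eqb_eq in E; lia.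
Qed.

Lemma C_K2 a : 2 < a -> C_const a 2 = Rpower 2 (1 - Rmax a 3).
Proof. intros; unfold C_const; destruct (Rle_dec a 1); [lra|]. destruct (Rle_dec a 2); [lra|]. auto. Qed.

Lemma ln_div' x y : 0 < x -> 0 < y -> ln (x / y) = ln x - ln y.
Proof. intros. unfold Rdiv. rewrite ln_mult, ln_Rinv; try apply Rinv_0_lt_compat; auto. Qed.

Lemma C_12 a K : 1 < a <= 2 -> (2 <= K)%nat ->
  4 * C_const a K = Rpower (Rpower (INR (K / 2)) ((1 - a) / (3 - a)) + Rpower (INR K - INR (K / 2)) ((1 - a) / (3 - a))) (3 - a).
Proof.
  intros Ha HK. unfold C_const. destruct (Rle_dec a 1); [lra|]. destruct (Rle_dec a 2); [|lra].
  cbv zeta.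
  destruct (Nat.even K) eqn:EK.
  - apply Nat.even_spec in EK. destruct EK as [j Hj].
    assert (Hj2 : (K / 2 = j)%nat) by (symmetry; apply (Nat.div_unique _ _ _ (K - 2 * j)); lia).
    rewrite Hj2. assert (HKj : INR K = 2 * INR j) by (subst; rewrite mult_INR; auto).
    assert (Hjp : 0 < INR j) by (apply INR_pos; lia).
    rewrite HKj. replace (2 * INR j - INR j) with (INR j) by ring.
    pose proof (Rpower_pos (INR j) ((1 - a) / (3 - a))).
    apply ln_inv.
    + apply Rmult_lt_0_compat; [lra|apply Rpower_pos].
    + apply Rpower_pos.
    + rewrite ln_mult, !ln_Rpower, ln_mult by (try apply Rpower_pos; lra).
      replace (Rpower (INR j) ((1 - a) / (3 - a)) + Rpower (INR j) ((1 - a) / (3 - a))) with (2 * Rpower (INR j) ((1 - a) / (3 - a))) by ring.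
      rewrite ln_mult, ln_Rpower by lra.
      replace 4 with (2 * 2) by ring. rewrite ln_mult by lra. field. lra.
  - assert (EK' : Nat.odd K = true) by (rewrite <- Nat.negb_even, EK; auto).
    apply Nat.odd_spec in EK'. destruct EK' as [j Hj].
    assert (Hj2 : (K / 2 = j)%nat) by (symmetry; apply (Nat.div_unique _ _ _ (K - 2 * j)); lia).
    rewrite Hj2. assert (HKj : INR K = 2 * INR j + 1) by (subst; rewrite plus_INR, mult_INR; auto).
    assert (Hjp : 0 < INR j) by (apply INR_pos; lia).
    set (J := INR j) in *. set (KK := INR K) in *.
    assert (HKp : 0 < KK) by lra.
    replace (KK - J) with (J + 1) by lra.
    replace (1 - 1 / KK) with ((2 / KK) * J) by (rewrite HKj; field; lra).
    replace (1 + 1 / KK) with ((2 / KK) * (J + 1)) by (rewrite HKj; field; lra).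
    assert (H2K : 0 < 2 / KK) by (apply Rdiv_lt_0_compat; lra).
    set (e := (1 - a) / (3 - a)).
    rewrite <- !Rpower_mult_distr by lra.
    replace ((Rpower (2 / KK) e * Rpower J e + Rpower (2 / KK) e * Rpower (J + 1) e) / 2)
      with (Rpower (2 / KK) e * (Rpower J e + Rpower (J + 1) e) / 2) by field.
    pose proof (Rpower_pos J e). pose proof (Rpower_pos (J+1) e). pose proof (Rpower_pos (2/KK) e).
    apply ln_inv.
    + repeat apply Rmult_lt_0_compat; try lra; apply Rpower_pos.
    + apply Rpower_pos.
    + assert (P1 : 0 < Rpower (2 / KK) e * (Rpower J e + Rpower (J + 1) e)) by (apply Rmult_lt_0_compat; lra).
      assert (P2 : 0 < Rpower (2 / KK) e * (Rpower J e + Rpower (J + 1) e) / 2) by lra.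
      assert (P3 : 0 < Rpower KK (1 - a)) by apply Rpower_pos.
      assert (P4 : 0 < Rpower (Rpower (2 / KK) e * (Rpower J e + Rpower (J + 1) e) / 2) (3 - a)) by apply Rpower_pos.
      assert (P5 : 0 < Rpower J e + Rpower (J + 1) e) by lra.
      rewrite ln_mult by (try apply Rmult_lt_0_compat; lra).
      rewrite ln_mult by lra.
      rewrite !ln_Rpower.
      rewrite ln_div' by lra. rewrite ln_mult by lra. rewrite ln_Rpower. rewrite ln_div' by lra.
      replace 4 with (2 * 2) by ring. rewrite ln_mult by lra. unfold e. field. lra.
Qed.

Lemma Qf_nonneg a K r x : 0 <= Qf a K r x.
Proof. unfold Qf. apply sumK_nonneg. intros. apply Rmult_le_pos. left; apply Rpower_pos. apply pow2_ge_0. Qed.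

Lemma sumK_term n f k : (forall j, (j < n)%nat -> 0 <= f j) -> (k < n)%nat -> f k <= sumK n f.
Proof.
  induction n; intros H Hk; [lia|]. cbn [sumK].
  destruct (Nat.eq_dec k n).
  - subst. pose proof (sumK_nonneg n f ltac:(intros; apply H; lia)). lra.
  - pose proof (IHn ltac:(intros; apply H; lia) ltac:(lia)). pose proof (H n ltac:(lia)). lra.
Qed.

Lemma sumK_pos_ex n f : 0 < sumK n f -> exists k, (k < n)%nat /\ 0 < f k.
Proof.
  intros H. destruct (Classical_Prop.classic (exists k, (k < n)%nat /\ 0 < f k)) as [|Hn]; auto.
  exfalso. assert (sumK n f <= sumK n (fun _ => 0)).
  { apply sumK_le. intros k Hk. destruct (Rle_lt_dec (f k) 0); auto. exfalso; apply Hn; eauto. }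
  rewrite sumK_const in H0. lra.
Qed.

Lemma Rpower_anti y z q : q <= 0 -> 0 < y <= z -> Rpower z q <= Rpower y q.
Proof.
  intros Hq Hyz.
  assert (E1 : Rpower z q = / Rpower z (- q)) by (rewrite <- Rpower_Ropp, Ropp_involutive; auto).
  assert (E2 : Rpower y q = / Rpower y (- q)) by (rewrite <- Rpower_Ropp, Ropp_involutive; auto).
  rewrite E1, E2. apply Rinv_le_contravar. apply Rpower_pos. apply Rle_Rpower_l; lra.
Qed.

Lemma holder2 p u v a b : 1 <= p -> 0 < u -> 0 < v -> 0 < a -> 0 < b -> a + b = 1 ->
  Rpower (u + v) p <= a * Rpower (u / a) p + b * Rpower (v / b) p.
Proof.
  intros Hp Hu Hv Ha Hb Hab.
  set (S := u + v).
  assert (HS : 0 < S) by (unfold S; lra).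
  pose proof (pow_convex p S (u / a) (or_intror Hp) HS ltac:(apply Rdiv_lt_0_compat; lra)) as H1.
  pose proof (pow_convex p S (v / b) (or_intror Hp) HS ltac:(apply Rdiv_lt_0_compat; lra)) as H2.
  apply (Rmult_le_compat_l a) in H1; [|lra]. apply (Rmult_le_compat_l b) in H2; [|lra].
  assert (E1 : a * (Rpower S p + p * Rpower S (p - 1) * (u / a - S)) = a * Rpower S p + p * Rpower S (p - 1) * (u - a * S)) by (field; lra).
  assert (E2 : b * (Rpower S p + p * Rpower S (p - 1) * (v / b - S)) = b * Rpower S p + p * Rpower S (p - 1) * (v - b * S)) by (field; lra).
  rewrite E1 in H1. rewrite E2 in H2.
  assert (E3 : a * Rpower S p + p * Rpower S (p - 1) * (u - a * S) + (b * Rpower S p + p * Rpower S (p - 1) * (v - b * S)) = Rpower S p).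
  { replace b with (1 - a) by lra. unfold S. ring. }
  lra.
Qed.

Lemma ident1 m A bt : 0 < m -> 0 < A -> 0 < 1 + bt ->
  1 / (m * Rpower (A / m) bt) = A * Rpower (Rpower m ((bt - 1) / (1 + bt)) / A) (1 + bt).
Proof.
  intros Hm HA Hb.
  assert (P1 : 0 < m * Rpower (A / m) bt) by (apply Rmult_lt_0_compat; [lra|apply Rpower_pos]).
  apply ln_inv.
  - apply Rdiv_lt_0_compat; lra.
  - apply Rmult_lt_0_compat; [lra|apply Rpower_pos].
  - assert (0 < Rpower m ((bt - 1) / (1 + bt))) by apply Rpower_pos.
    assert (0 < Rpower (A / m) bt) by apply Rpower_pos.
    assert (0 < A / m) by (apply Rdiv_lt_0_compat; lra).
    assert (0 < Rpower m ((bt - 1) / (1 + bt)) / A) by (apply Rdiv_lt_0_compat; lra).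
    assert (0 < Rpower (Rpower m ((bt - 1) / (1 + bt)) / A) (1 + bt)) by apply Rpower_pos.
    repeat first [rewrite ln_Rpower | rewrite ln_div' by lra | rewrite ln_mult by lra].
    rewrite ln_1. field. lra.
Qed.

Lemma half_bounds K : (2 * (K / 2) <= K /\ K <= 2 * (K / 2) + 1)%nat.
Proof. pose proof (Nat.div_mod K 2 ltac:(lia)). pose proof (Nat.mod_upper_bound K 2 ltac:(lia)). lia. Qed.

Lemma phi_key K m e : e <= 0 -> (2 <= K)%nat -> (1 <= m)%nat -> (m <= K / 2)%nat ->
  Rpower (INR (K / 2)) e + Rpower (INR K - INR (K / 2)) e <= Rpower (INR m) e + Rpower (INR K - INR m) e.
Proof.
  intros He HK Hm Hmh.
  pose proof (half_bounds K) as [Hb1 Hb2].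
  set (KK := INR K). set (h := INR (K / 2)).
  assert (Hh1 : 1 <= h) by (unfold h; apply (le_INR 1); lia).
  assert (Hh2 : 2 * h <= KK) by (unfold h, KK; rewrite <- (mult_INR 2); apply le_INR; lia).
  assert (Hm1 : 1 <= INR m) by (apply (le_INR 1); lia).
  assert (Hmh' : INR m <= h) by (unfold h; apply le_INR; lia).
  pose proof (mono_deriv (fun y => -1 * (Rpower y e + Rpower (KK + y * (-1)) e))
     (fun y => -1 * (e * Rpower y (e - 1) + (-1) * (e * Rpower (KK + y * (-1)) (e - 1)))) (INR m) h Hmh') as H.
  cbv beta in H. replace (KK + INR m * (-1)) with (KK - INR m) in H by ring.
  replace (KK + h * (-1)) with (KK - h) in H by ring.
  cut (-1 * (Rpower (INR m) e + Rpower (KK - INR m) e) <= -1 * (Rpower h e + Rpower (KK - h) e)). lra.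
  apply H.
  - intros y Hy. apply is_derive_scal. apply isd_plus. apply isd_pow; lra.
    apply (isd_comp (fun t => Rpower t e) (fun y => KK + y * (-1))). apply isd_pow; lra. apply isd_affine.
  - intros y Hy.
    assert (Rpower (KK + y * (-1)) (e - 1) <= Rpower y (e - 1)) by (apply Rpower_anti; lra).
    assert (0 <= (- e) * (Rpower y (e - 1) - Rpower (KK + y * (-1)) (e - 1))) by (apply Rmult_le_pos; lra).
    replace (-1 * (e * Rpower y (e - 1) + -1 * (e * Rpower (KK + y * -1) (e - 1)))) with
      ((- e) * (Rpower y (e - 1) - Rpower (KK + y * (-1)) (e - 1))) by ring. lra.
Qed.

Lemma int_min K m n e : e <= 0 -> (2 <= K)%nat -> (1 <= m)%nat -> (1 <= n)%nat -> (m + n = K)%nat ->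
  Rpower (INR (K / 2)) e + Rpower (INR K - INR (K / 2)) e <= Rpower (INR m) e + Rpower (INR n) e.
Proof.
  intros He HK Hm Hn Hmn. pose proof (half_bounds K) as [Hb1 Hb2].
  destruct (Compare_dec.le_lt_dec m n).
  - replace (INR n) with (INR K - INR m) by (subst; rewrite plus_INR; ring).
    apply phi_key; auto; lia.
  - replace (INR m) with (INR K - INR n) by (subst; rewrite plus_INR; ring).
    rewrite (Rplus_comm (Rpower (INR K - INR n) e)). apply phi_key; auto; lia.
Qed.

Definition ifP (x : nat -> R) k (u v : R) := if Rle_dec 0 (x k) then u else v.

Lemma ifP_lin x k (u v u' v' c c' : R) : c * ifP x k u v + c' * ifP x k u' v' = ifP x k (c * u + c' * u') (c * v + c' * v').
Proof. unfold ifP; destruct (Rle_dec 0 (x k)); auto. Qed.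

Lemma pointwise a r y x c : 0 < r -> y ^ 2 = x ^ 2 ->
  2 * c * y - c ^ 2 * Rpower r (2 - a) <= Rpower r (a - 2) * x ^ 2.
Proof.
  intros Hr Hy. set (R0 := Rpower r (2 - a)). assert (HR : 0 < R0) by apply Rpower_pos.
  assert (E : Rpower r (a - 2) = / R0) by (unfold R0; rewrite <- Rpower_Ropp; f_equal; ring).
  rewrite E, <- Hy.
  assert (0 <= (y - c * R0) ^ 2 / R0) by (apply Rdiv_le_0_compat; [apply pow2_ge_0|lra]).
  assert (E2 : (y - c * R0) ^ 2 / R0 = / R0 * y ^ 2 - (2 * c * y - c ^ 2 * R0)) by (field; lra).
  lra.
Qed.

Definition sP (K : nat) (x : nat -> R) := sumK K (fun k => ifP x k (x k) 0).
Definition sN (K : nat) (x : nat -> R) := sumK K (fun k => ifP x k 0 (- x k)).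
Definition aP (K : nat) (r x : nat -> R) := sumK K (fun k => ifP x k (r k) 0).
Definition aN (K : nat) (r x : nat -> R) := sumK K (fun k => ifP x k 0 (r k)).
Definition AP (a : R) (K : nat) (r x : nat -> R) := sumK K (fun k => ifP x k (Rpower (r k) (2 - a)) 0).
Definition AN (a : R) (K : nat) (r x : nat -> R) := sumK K (fun k => ifP x k 0 (Rpower (r k) (2 - a))).
Definition cP (K : nat) (x : nat -> R) := sumK K (fun k => ifP x k 1 0).
Definition cN (K : nat) (x : nat -> R) := sumK K (fun k => ifP x k 0 1).

Lemma sP_sN K x : sP K x - sN K x = sumK K x.
Proof.
  unfold sP, sN.
  rewrite (sumK_ext K x (fun k => ifP x k (x k) 0 + (-1) * ifP x k 0 (- x k)))
    by (intros; unfold ifP; destruct (Rle_dec 0 (x k)); ring).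
  rewrite sumK_plus, sumK_scal. ring.
Qed.

Lemma sP_sN_norm K x : sP K x + sN K x = norm1 K x.
Proof.
  unfold sP, sN, norm1. rewrite <- sumK_plus. apply sumK_ext; intros. unfold ifP.
  destruct (Rle_dec 0 (x k)). rewrite Rabs_right; lra. rewrite Rabs_left; lra.
Qed.

Lemma aP_aN K r x : aP K r x + aN K r x = sumK K r.
Proof. unfold aP, aN. rewrite <- sumK_plus. apply sumK_ext; intros. unfold ifP. destruct (Rle_dec 0 (x k)); ring. Qed.

Lemma sP_nonneg K x : 0 <= sP K x.
Proof. apply sumK_nonneg; intros; unfold ifP; destruct (Rle_dec 0 (x k)); lra. Qed.

Lemma QF_core a K r x c d : (forall k, (k < K)%nat -> 0 < r k) ->
  2 * c * sP K x - c ^ 2 * AP a K r x + (2 * d * sN K x - d ^ 2 * AN a K r x) <= Qf a K r x.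
Proof.
  intros Hr. unfold sP, sN, AP, AN, Qf.
  assert (E : forall (u v w z : R), 2 * c * u - c ^ 2 * v + (2 * d * w - d ^ 2 * z) = (2 * c) * u + (- c ^ 2) * v + ((2 * d) * w + (- d ^ 2) * z)) by (intros; ring).
  rewrite E, <- !sumK_scal, <- !sumK_plus. apply sumK_le. intros k Hk.
  rewrite !ifP_lin. unfold ifP. destruct (Rle_dec 0 (x k)).
  - replace (2 * c * x k + - c ^ 2 * Rpower (r k) (2 - a) + (2 * d * 0 + - d ^ 2 * 0)) with (2 * c * x k - c ^ 2 * Rpower (r k) (2 - a)) by ring.
    apply pointwise; auto.
  - replace (2 * c * 0 + - c ^ 2 * 0 + (2 * d * - x k + - d ^ 2 * Rpower (r k) (2 - a))) with (2 * d * (- x k) - d ^ 2 * Rpower (r k) (2 - a)) by ring.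
    apply pointwise; auto. ring.
Qed.

Lemma QF_gen a K r x A' B' : (forall k, (k < K)%nat -> 0 < r k) -> 0 < A' -> 0 < B' ->
  AP a K r x <= A' -> AN a K r x <= B' ->
  sP K x ^ 2 / A' + sN K x ^ 2 / B' <= Qf a K r x.
Proof.
  intros Hr HA HB H1 H2.
  pose proof (QF_core a K r x (sP K x / A') (sN K x / B') Hr) as H.
  assert (Hc : (sP K x / A') ^ 2 * AP a K r x <= (sP K x / A') ^ 2 * A') by (apply Rmult_le_compat_l; [apply pow2_ge_0|auto]).
  assert (Hd : (sN K x / B') ^ 2 * AN a K r x <= (sN K x / B') ^ 2 * B') by (apply Rmult_le_compat_l; [apply pow2_ge_0|auto]).
  assert (E1 : 2 * (sP K x / A') * sP K x - (sP K x / A') ^ 2 * A' = sP K x ^ 2 / A') by (field; lra).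
  assert (E2 : 2 * (sN K x / B') * sN K x - (sN K x / B') ^ 2 * B' = sN K x ^ 2 / B') by (field; lra).
  lra.
Qed.

Lemma count_ex K x : exists m, (m <= K)%nat /\ cP K x = INR m /\ cN K x = INR K - INR m.
Proof.
  unfold cP, cN. induction K as [|K IH].
  - exists 0%nat. cbn [sumK]. split; auto. split; cbn [INR]; ring.
  - destruct IH as [m [Hm [E1 E2]]]. cbn [sumK]. rewrite E1, E2. unfold ifP.
    destruct (Rle_dec 0 (x K)).
    + exists (S m). split; [lia|]. rewrite !S_INR. split; ring.
    + exists m. split; [lia|]. rewrite !S_INR. split; ring.
Qed.

Lemma AP_convex a K r x : a <= 1 -> (forall k, (k < K)%nat -> 0 < r k) -> 0 < aP K r x ->
  AP a K r x <= Rpower (aP K r x) (2 - a).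
Proof.
  intros Ha Hr HaP.
  set (A0 := aP K r x) in *.
  assert (Hle : forall k, (k < K)%nat -> ifP x k (Rpower (r k) (2 - a)) 0 <= Rpower A0 (1 - a) * ifP x k (r k) 0).
  { intros k Hk. unfold ifP. destruct (Rle_dec 0 (x k)); [|lra].
    assert (Hrk : r k <= A0).
    { unfold A0, aP. apply (sumK_term K (fun j => ifP x j (r j) 0) k) in Hk.
      - unfold ifP in Hk. destruct (Rle_dec 0 (x k)); [auto|contradiction].
      - intros j Hj. unfold ifP. destruct (Rle_dec 0 (x j)); [left; apply Hr; auto|lra]. }
    replace (2 - a) with ((1 - a) + 1) by ring. rewrite Rpower_plus, Rpower_1 by (apply Hr; auto).
    apply Rmult_le_compat_r. left; apply Hr; auto.
    apply Rle_Rpower_l. lra. split; auto. }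
  unfold AP. eapply Rle_trans. apply sumK_le. apply Hle.
  rewrite sumK_scal. fold (aP K r x). fold A0.
  replace (2 - a) with ((1 - a) + 1) by ring. rewrite Rpower_plus, Rpower_1 by auto. lra.
Qed.

Lemma AP_concave a K r x m : 1 <= a <= 2 -> (forall k, (k < K)%nat -> 0 < r k) -> 0 < aP K r x ->
  cP K x = m -> 0 < m ->
  AP a K r x <= m * Rpower (aP K r x / m) (2 - a).
Proof.
  intros Ha Hr HaP Hc Hm.
  set (A0 := aP K r x) in *. set (c := A0 / m). set (bt := 2 - a).
  assert (Hcp : 0 < c) by (unfold c; apply Rdiv_lt_0_compat; lra).
  assert (Hle : forall k, (k < K)%nat -> ifP x k (Rpower (r k) bt) 0 <=
     (Rpower c bt - bt * Rpower c (bt - 1) * c) * ifP x k 1 0 + (bt * Rpower c (bt - 1)) * ifP x k (r k) 0).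
  { intros k Hk. rewrite ifP_lin. unfold ifP. destruct (Rle_dec 0 (x k)); [|lra].
    pose proof (pow_concave bt c (r k) ltac:(unfold bt; lra) Hcp (Hr k Hk)). lra. }
  unfold AP. fold bt. eapply Rle_trans. apply sumK_le. apply Hle.
  rewrite sumK_plus, !sumK_scal. fold (cP K x). fold (aP K r x). fold A0. rewrite Hc.
  assert (E : A0 = c * m) by (unfold c; field; lra). rewrite E. 
  right. ring.
Qed.

Lemma AN_convex a K r x : a <= 1 -> (forall k, (k < K)%nat -> 0 < r k) -> 0 < aN K r x ->
  AN a K r x <= Rpower (aN K r x) (2 - a).
Proof.
  intros Ha Hr HaP.
  set (A0 := aN K r x) in *.
  assert (Hle : forall k, (k < K)%nat -> ifP x k 0 (Rpower (r k) (2 - a)) <= Rpower A0 (1 - a) * ifP x k 0 (r k)).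
  { intros k Hk. unfold ifP. destruct (Rle_dec 0 (x k)); [lra|].
    assert (Hrk : r k <= A0).
    { unfold A0, aN. apply (sumK_term K (fun j => ifP x j 0 (r j)) k) in Hk.
      - unfold ifP in Hk. destruct (Rle_dec 0 (x k)); [contradiction|auto].
      - intros j Hj. unfold ifP. destruct (Rle_dec 0 (x j)); [lra|left; apply Hr; auto]. }
    replace (2 - a) with ((1 - a) + 1) by ring. rewrite Rpower_plus, Rpower_1 by (apply Hr; auto).
    apply Rmult_le_compat_r. left; apply Hr; auto.
    apply Rle_Rpower_l. lra. split; auto. }
  unfold AN. eapply Rle_trans. apply sumK_le. apply Hle.
  rewrite sumK_scal. fold (aN K r x). fold A0.
  replace (2 - a) with ((1 - a) + 1) by ring. rewrite Rpower_plus, Rpower_1 by auto. lra.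
Qed.

Lemma AN_concave a K r x m : 1 <= a <= 2 -> (forall k, (k < K)%nat -> 0 < r k) -> 0 < aN K r x ->
  cN K x = m -> 0 < m ->
  AN a K r x <= m * Rpower (aN K r x / m) (2 - a).
Proof.
  intros Ha Hr HaP Hc Hm.
  set (A0 := aN K r x) in *. set (c := A0 / m). set (bt := 2 - a).
  assert (Hcp : 0 < c) by (unfold c; apply Rdiv_lt_0_compat; lra).
  assert (Hle : forall k, (k < K)%nat -> ifP x k 0 (Rpower (r k) bt) <=
     (Rpower c bt - bt * Rpower c (bt - 1) * c) * ifP x k 0 1 + (bt * Rpower c (bt - 1)) * ifP x k 0 (r k)).
  { intros k Hk. rewrite ifP_lin. unfold ifP. destruct (Rle_dec 0 (x k)); [lra|].
    pose proof (pow_concave bt c (r k) ltac:(unfold bt; lra) Hcp (Hr k Hk)). lra. }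
  unfold AN. fold bt. eapply Rle_trans. apply sumK_le. apply Hle.
  rewrite sumK_plus, !sumK_scal. fold (cN K x). fold (aN K r x). fold A0. rewrite Hc.
  assert (E : A0 = c * m) by (unfold c; field; lra). rewrite E. 
  right. ring.
Qed.

Lemma Rpower_1_l e : Rpower 1 e = 1.
Proof. unfold Rpower. rewrite ln_1, Rmult_0_r, exp_0. auto. Qed.

Lemma QF_frame a K C :
  (forall r x, (forall k, (k < K)%nat -> 0 < r k) -> sumK K r = 1 -> sumK K x = 0 ->
     0 < sP K x -> sN K x = sP K x -> 0 < aP K r x -> 0 < aN K r x -> 1 <= cP K x -> 1 <= cN K x ->
     C * (2 * sP K x) ^ 2 <= Qf a K r x) -> QF a K C.
Proof.
  intros H r x Hr Sr Sx.
  pose proof (sP_sN K x) as E1. pose proof (sP_sN_norm K x) as E2. rewrite Sx in E1.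
  assert (EN : norm1 K x = 2 * sP K x) by lra. rewrite EN.
  destruct (sP_nonneg K x) as [Hs|Hs].
  2: { rewrite <- Hs. replace (C * (2 * 0) ^ 2) with 0 by ring. apply Qf_nonneg. }
  assert (Hs2 : 0 < sN K x) by lra.
  destruct (sumK_pos_ex _ _ Hs) as [k [Hk Hk2]].
  destruct (sumK_pos_ex _ _ Hs2) as [j [Hj Hj2]].
  unfold ifP in Hk2, Hj2.
  destruct (Rle_dec 0 (x k)) as [Pk|Pk]; [|lra].
  destruct (Rle_dec 0 (x j)) as [Pj|Pj]; [lra|].
  apply H; auto.
  - lra.
  - apply Rlt_le_trans with (r k). apply Hr; auto.
    apply (sumK_term K (fun i => ifP x i (r i) 0) k) in Hk.
    + unfold ifP at 1 in Hk. destruct (Rle_dec 0 (x k)); [auto|contradiction].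
    + intros i Hi. unfold ifP. destruct (Rle_dec 0 (x i)); [left; apply Hr; auto|lra].
  - apply Rlt_le_trans with (r j). apply Hr; auto.
    apply (sumK_term K (fun i => ifP x i 0 (r i)) j) in Hj.
    + unfold ifP at 1 in Hj. destruct (Rle_dec 0 (x j)); [contradiction|auto].
    + intros i Hi. unfold ifP. destruct (Rle_dec 0 (x i)); [lra|left; apply Hr; auto].
  - apply (sumK_term K (fun i => ifP x i 1 0) k) in Hk.
    + unfold ifP at 1 in Hk. destruct (Rle_dec 0 (x k)); [auto|contradiction].
    + intros i Hi. unfold ifP. destruct (Rle_dec 0 (x i)); lra.
  - apply (sumK_term K (fun i => ifP x i 0 1) j) in Hj.
    + unfold ifP at 1 in Hj. destruct (Rle_dec 0 (x j)); [contradiction|auto].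
    + intros i Hi. unfold ifP. destruct (Rle_dec 0 (x i)); lra.
Qed.

Lemma finish C s s' A' B' Q : 0 < A' -> 0 < B' -> 4 * C <= 1 / A' + 1 / B' -> s' = s ->
  s ^ 2 / A' + s' ^ 2 / B' <= Q -> C * (2 * s) ^ 2 <= Q.
Proof.
  intros HA HB H1 Hs H2. subst s'.
  assert (E : s ^ 2 / A' + s ^ 2 / B' = s ^ 2 * (1 / A' + 1 / B')) by (field; lra).
  assert (s ^ 2 * (4 * C) <= s ^ 2 * (1 / A' + 1 / B')) by (apply Rmult_le_compat_l; [apply pow2_ge_0|auto]).
  replace (C * (2 * s) ^ 2) with (s ^ 2 * (4 * C)) by ring. lra.
Qed.

Lemma QF_le1 a K : a <= 1 -> QF a K (C_const a K).
Proof.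
  intros Ha. apply QF_frame. intros r x Hr Sr Sx Hs HsN HaP HaN HcP HcN.
  set (A' := Rpower (aP K r x) (2 - a)). set (B' := Rpower (aN K r x) (2 - a)).
  assert (HA : 0 < A') by apply Rpower_pos. assert (HB : 0 < B') by apply Rpower_pos.
  apply (finish _ _ (sN K x) A' B'); auto.
  - rewrite C_le1 by auto.
    assert (E1 : 1 / A' = aP K r x * Rpower (1 / aP K r x) (1 + (2 - a))).
    { pose proof (ident1 1 (aP K r x) (2 - a) ltac:(lra) HaP ltac:(lra)) as Hi.
      rewrite Rpower_1_l in Hi. unfold A'. rewrite <- Hi. f_equal. rewrite Rmult_1_l. f_equal. field. }
    assert (E2 : 1 / B' = aN K r x * Rpower (1 / aN K r x) (1 + (2 - a))).
    { pose proof (ident1 1 (aN K r x) (2 - a) ltac:(lra) HaN ltac:(lra)) as Hi.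
      rewrite Rpower_1_l in Hi. unfold B'. rewrite <- Hi. f_equal. rewrite Rmult_1_l. f_equal. field. }
    rewrite E1, E2.
    pose proof (aP_aN K r x) as Eab. rewrite Sr in Eab.
    pose proof (holder2 (1 + (2 - a)) 1 1 (aP K r x) (aN K r x) ltac:(lra) ltac:(lra) ltac:(lra) HaP HaN Eab) as Hh.
    replace (4 * Rpower 2 (1 - a)) with (Rpower (1 + 1) (1 + (2 - a))); auto.
    replace (1 + (2 - a)) with (2 + (1 - a)) by ring. rewrite Rpower_plus, Rpower_2 by lra.
    replace (1 + 1) with 2 by ring. ring.
  - apply QF_gen; auto.
    + apply AP_convex; auto.
    + apply AN_convex; auto.
Qed.

Lemma QF_12 a K : 1 < a <= 2 -> (2 <= K)%nat -> QF a K (C_const a K).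
Proof.
  intros Ha HK. apply QF_frame. intros r x Hr Sr Sx Hs HsN HaP HaN HcP HcN.
  destruct (count_ex K x) as [m [HmK [Em En]]].
  set (A' := cP K x * Rpower (aP K r x / cP K x) (2 - a)).
  set (B' := cN K x * Rpower (aN K r x / cN K x) (2 - a)).
  assert (HA : 0 < A') by (apply Rmult_lt_0_compat; [lra|apply Rpower_pos]).
  assert (HB : 0 < B') by (apply Rmult_lt_0_compat; [lra|apply Rpower_pos]).
  apply (finish _ _ (sN K x) A' B'); auto.
  - set (e := (1 - a) / (3 - a)).
    assert (E1 : 1 / A' = aP K r x * Rpower (Rpower (cP K x) e / aP K r x) (1 + (2 - a))).
    { unfold A', e. rewrite ident1 by lra. do 3 f_equal. f_equal. field. lra. }
    assert (E2 : 1 / B' = aN K r x * Rpower (Rpower (cN K x) e / aN K r x) (1 + (2 - a))).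
    { unfold B', e. rewrite ident1 by lra. do 3 f_equal. f_equal. field. lra. }
    rewrite E1, E2.
    pose proof (aP_aN K r x) as Eab. rewrite Sr in Eab.
    pose proof (holder2 (1 + (2 - a)) (Rpower (cP K x) e) (Rpower (cN K x) e) (aP K r x) (aN K r x)
      ltac:(lra) ltac:(apply Rpower_pos) ltac:(apply Rpower_pos) HaP HaN Eab) as Hh.
    eapply Rle_trans; [|exact Hh].
    rewrite C_12 by auto. fold e. replace (1 + (2 - a)) with (3 - a) by ring.
    apply Rle_Rpower_l. lra. split.
    + pose proof (Rpower_pos (INR (K / 2)) e). pose proof (Rpower_pos (INR K - INR (K / 2)) e). lra.
    + rewrite Em, En. replace (INR K - INR m) with (INR (K - m)) by (rewrite minus_INR; auto).
      assert (Hm1 : (1 <= m)%nat) by (apply INR_le; change (INR 1) with 1; lra).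
      assert (Hn1 : (1 <= K - m)%nat) by (apply INR_le; change (INR 1) with 1; rewrite minus_INR by auto; lra).
      apply int_min; auto; try lia.
      unfold e, Rdiv. rewrite <- (Rmult_0_l (/ (3 - a))). apply Rmult_le_compat_r; [left; apply Rinv_0_lt_compat; lra | lra].
  - apply QF_gen; auto.
    + apply AP_concave; auto; lra.
    + apply AN_concave; auto; lra.
Qed.

Lemma QF_K3 a K : 2 < a -> (3 <= K)%nat -> QF a K (C_const a K).
Proof.
  intros Ha HK r x Hr Sr Sx. rewrite C_K3 by auto. rewrite Rmult_0_l. apply Qf_nonneg.
Qed.

Lemma QF_K2 a : 2 < a -> QF a 2 (C_const a 2).
Proof.
  intros Ha r x Hr Sr Sx. unfold norm1, Qf. cbn [sumK] in *.
  pose proof (Hr 0%nat ltac:(lia)) as H0. pose proof (Hr 1%nat ltac:(lia)) as H1.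
  assert (Ex : x 1%nat = - x 0%nat) by lra.
  assert (Er : r 1%nat = 1 - r 0%nat) by lra.
  rewrite Ex, Rabs_Ropp.
  replace ((0 + Rabs (x 0%nat) + Rabs (x 0%nat)) ^ 2) with (4 * x 0%nat ^ 2)
    by (replace (0 + Rabs (x 0%nat) + Rabs (x 0%nat)) with (2 * Rabs (x 0%nat)) by ring;
        rewrite Rpow_mult_distr, pow2_abs; ring).
  replace (0 + Rpower (r 0%nat) (a - 2) * x 0%nat ^ 2 + Rpower (r 1%nat) (a - 2) * (- x 0%nat) ^ 2)
    with (x 0%nat ^ 2 * (Rpower (r 0%nat) (a - 2) + Rpower (r 1%nat) (a - 2))) by ring.
  replace (C_const a 2 * (4 * x 0%nat ^ 2)) with (x 0%nat ^ 2 * (4 * C_const a 2)) by ring.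
  apply Rmult_le_compat_l; [apply pow2_ge_0|].
  rewrite C_K2 by auto.
  destruct (Rle_dec a 3) as [Ha3|Ha3].
  - rewrite Rmax_right by lra. replace (1 - 3) with (- 2) by ring. rewrite Rpower_m2 by lra.
    assert (forall t, 0 < t < 1 -> t <= Rpower t (a - 2)).
    { intros t Ht. replace (a - 2) with ((a - 3) + 1) by ring. rewrite Rpower_plus, Rpower_1 by lra.
      assert (1 <= Rpower t (a - 3)) by (rewrite <- (Rpower_1_l (a - 3)); apply Rpower_anti; lra).
      nra. }
    pose proof (H (r 0%nat) ltac:(lra)). pose proof (H (r 1%nat) ltac:(lra)).
    replace (4 * / 2 ^ 2) with 1 by field. lra.
  - rewrite Rmax_left by lra.
    pose proof (pow_convex (a - 2) (1/2) (r 0%nat) ltac:(lra) ltac:(lra) H0).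
    pose proof (pow_convex (a - 2) (1/2) (r 1%nat) ltac:(lra) ltac:(lra) H1).
    assert (E : 4 * Rpower 2 (1 - a) = 2 * Rpower (1 / 2) (a - 2)).
    { assert (E1 : Rpower (1/2) (a - 2) = Rpower 2 (- (a - 2))).
      { unfold Rpower. f_equal. replace (1/2) with (/2) by field. rewrite ln_Rinv by lra. ring. }
      rewrite E1. replace 4 with (Rpower 2 2) by (rewrite Rpower_2; lra).
      assert (E3 : 2 * Rpower 2 (- (a - 2)) = Rpower 2 (1 + - (a - 2))) by (rewrite Rpower_plus, Rpower_1; lra).
      rewrite E3, <- Rpower_plus. f_equal. ring. }
    rewrite E.
    assert (E4 : (a - 2) * Rpower (1 / 2) (a - 2 - 1) * (r 0%nat - 1 / 2) + (a - 2) * Rpower (1 / 2) (a - 2 - 1) * (r 1%nat - 1 / 2) = 0)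
      by (rewrite Er; field).
    lra.
Qed.

Lemma sumK_app m j f : sumK (m + j) f = sumK m f + sumK j (fun i => f (m + i)%nat).
Proof.
  induction j as [|j IH].
  - rewrite Nat.add_0_r. cbn [sumK]. ring.
  - replace (m + S j)%nat with (S (m + j)) by lia. cbn [sumK]. rewrite IH. ring.
Qed.

Lemma sumK_block K m f u w : (m <= K)%nat -> (forall k, (k < m)%nat -> f k = u) ->
  (forall k, (m <= k)%nat -> f k = w) -> sumK K f = INR m * u + (INR K - INR m) * w.
Proof.
  intros HmK Hu Hw. replace K with (m + (K - m))%nat at 1 by lia.
  rewrite sumK_app. rewrite (sumK_ext m f (fun _ => u)) by auto.
  rewrite (sumK_ext (K - m) _ (fun _ => w)) by (intros; apply Hw; lia).
  rewrite !sumK_const, minus_INR by auto. ring.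
Qed.

Lemma sumK_two K f u v w : (2 <= K)%nat -> f 0%nat = u -> f 1%nat = v -> (forall k, (2 <= k)%nat -> f k = w) ->
  sumK K f = u + v + (INR K - 2) * w.
Proof.
  intros HK H0 H1 Hw. replace K with (2 + (K - 2))%nat at 1 by lia.
  rewrite sumK_app. rewrite (sumK_ext (K - 2) _ (fun _ => w)) by (intros; apply Hw; lia).
  rewrite sumK_const, minus_INR by auto. cbn [sumK]. rewrite H0, H1. change (INR 2) with 2. ring.
Qed.

Lemma Rpower_cont c p eps : 0 < c -> 0 < eps ->
  exists d, 0 < d /\ forall y, Rabs (y - c) < d -> Rpower y p < Rpower c p + eps.
Proof.
  intros Hc He.
  pose proof (isd_cont (fun y => Rpower y p) c _ (isd_pow p c Hc)) as Hcont.
  destruct (Hcont eps He) as [d [Hd H]].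
  exists d. split; auto. intros y Hy.
  destruct (Req_dec y c) as [->|Hne]. lra.
  assert (R_dist (Rpower y p) (Rpower c p) < eps).
  { apply (H y). split. split. exact I. auto. unfold R_dist. auto. }
  unfold R_dist in H0. apply Rabs_def2 in H0. lra.
Qed.

Lemma config2 a K C u0 u1 w t L : negS_strongly_convex a K C -> (2 <= K)%nat ->
  0 < u0 < 1 -> 0 < u1 < 1 -> ((2 < K)%nat -> 0 < w < 1) -> u0 + u1 + (INR K - 2) * w = 1 ->
  0 < t -> u0 + t < 1 -> 0 < u1 - t ->
  (forall s, 0 <= s <= 1 -> Rpower (u0 + s * t) (a - 2) + Rpower (u1 - s * t) (a - 2) <= L) ->
  C * 4 <= L.
Proof.
  intros HS HK H0 H1 Hw Hsum Ht H2 H3 HL.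
  set (q := fun k => match k with 0%nat => u0 | 1%nat => u1 | _ => w end).
  set (p := fun k => match k with 0%nat => u0 + t | 1%nat => u1 - t | _ => w end).
  assert (Hq : in_relint K q).
  { split.
    - intros k Hk. destruct k as [|[|k]]; cbn; auto. apply Hw; lia.
    - rewrite (sumK_two K q u0 u1 w); auto. intros [|[|k]] Hk; [lia|lia|auto]. }
  assert (Hp : in_relint K p).
  { split.
    - intros k Hk. destruct k as [|[|k]]; cbn; try lra. apply Hw; lia.
    - rewrite (sumK_two K p (u0 + t) (u1 - t) w); auto. lra. intros [|[|k]] Hk; [lia|lia|auto]. }
  pose proof (upper_from_SC a K C q p (t ^ 2 * L) HS Hq Hp) as H.
  assert (EN : norm1 K (fun k => p k - q k) = 2 * t).
  { unfold norm1. rewrite (sumK_two K _ (Rabs t) (Rabs (- t)) 0); auto.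
    rewrite Rabs_Ropp, Rabs_right by lra. ring.
    cbn. f_equal. ring. cbn. f_equal. ring.
    intros [|[|k]] Hk; try lia. cbn. replace (w - w) with 0 by ring. apply Rabs_R0. }
  rewrite EN in H.
  assert (C * (2 * t) ^ 2 <= t ^ 2 * L).
  { apply H. intros s Hs. unfold Qf.
    rewrite (sumK_two K _ (Rpower (u0 + s * t) (a - 2) * t ^ 2) (Rpower (u1 - s * t) (a - 2) * t ^ 2) 0); auto.
    - pose proof (HL s Hs). 
      replace (Rpower (u0 + s * t) (a - 2) * t ^ 2 + Rpower (u1 - s * t) (a - 2) * t ^ 2 + (INR K - 2) * 0)
        with (t ^ 2 * (Rpower (u0 + s * t) (a - 2) + Rpower (u1 - s * t) (a - 2))) by ring.
      apply Rmult_le_compat_l; [apply pow2_ge_0|auto].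
    - cbn. f_equal. f_equal. ring. ring.
    - cbn. f_equal. f_equal. ring. ring.
    - intros [|[|k]] Hk; try lia. cbn. ring. }
  assert (0 < t ^ 2) by (apply pow_lt; lra).
  replace (C * (2 * t) ^ 2) with (t ^ 2 * (C * 4)) in H4 by ring.
  apply Rmult_le_reg_l with (t ^ 2); auto.
Qed.

Lemma config_block a K C m A0 B0 t L : negS_strongly_convex a K C -> (1 <= m)%nat -> (m < K)%nat ->
  0 < A0 < 1 -> 0 < B0 < 1 -> INR m * A0 + (INR K - INR m) * B0 = 1 ->
  0 < t -> A0 + t / INR m < 1 -> 0 < B0 - t / (INR K - INR m) ->
  (forall s, 0 <= s <= 1 -> / INR m * Rpower (A0 + s * (t / INR m)) (a - 2) +
      / (INR K - INR m) * Rpower (B0 - s * (t / (INR K - INR m))) (a - 2) <= L) ->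
  C * 4 <= L.
Proof.
  intros HS Hm HmK HA HB Hsum Ht H2 H3 HL.
  assert (HM : 1 <= INR m) by (apply (le_INR 1); lia).
  assert (HN : 1 <= INR K - INR m) by (rewrite <- minus_INR by lia; apply (le_INR 1); lia).
  set (Nn := INR K - INR m) in *. set (M := INR m) in *.
  set (q := fun k => if Nat.ltb k m then A0 else B0).
  set (p := fun k => if Nat.ltb k m then A0 + t / M else B0 - t / Nn).
  assert (Hlt : forall k, (k < m)%nat -> Nat.ltb k m = true) by (intros; apply Nat.ltb_lt; auto).
  assert (Hge : forall k, (m <= k)%nat -> Nat.ltb k m = false) by (intros; apply Nat.ltb_ge; auto).
  assert (Htm : 0 < t / M) by (apply Rdiv_lt_0_compat; lra).
  assert (Htn : 0 < t / Nn) by (apply Rdiv_lt_0_compat; lra).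
  assert (Hq : in_relint K q).
  { split.
    - intros k Hk. unfold q. destruct (Nat.ltb k m); lra.
    - rewrite (sumK_block K m q A0 B0); try lia; auto.
      intros k Hk; unfold q; rewrite Hlt; auto. intros k Hk; unfold q; rewrite Hge; auto. }
  assert (Hp : in_relint K p).
  { split.
    - intros k Hk. unfold p. destruct (Nat.ltb k m); lra.
    - rewrite (sumK_block K m p (A0 + t / M) (B0 - t / Nn)); try lia.
      + fold M Nn. replace (M * (A0 + t / M) + Nn * (B0 - t / Nn)) with (M * A0 + Nn * B0) by (field; lra). auto.
      + intros k Hk; unfold p; rewrite Hlt; auto.
      + intros k Hk; unfold p; rewrite Hge; auto. }
  pose proof (upper_from_SC a K C q p (t ^ 2 * L) HS Hq Hp) as H.
  assert (EN : norm1 K (fun k => p k - q k) = 2 * t).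
  { unfold norm1. rewrite (sumK_block K m _ (t / M) (t / Nn)); try lia.
    - fold M Nn. field. lra.
    - intros k Hk; unfold p, q; rewrite Hlt by auto. replace (A0 + t / M - A0) with (t / M) by ring. apply Rabs_right; lra.
    - intros k Hk; unfold p, q; rewrite Hge by auto. replace (B0 - t / Nn - B0) with (- (t / Nn)) by ring.
      rewrite Rabs_Ropp. apply Rabs_right; lra. }
  rewrite EN in H.
  assert (C * (2 * t) ^ 2 <= t ^ 2 * L).
  { apply H. intros s Hs. unfold Qf.
    rewrite (sumK_block K m _ (Rpower (A0 + s * (t / M)) (a - 2) * (t / M) ^ 2) (Rpower (B0 - s * (t / Nn)) (a - 2) * (t / Nn) ^ 2)); try lia.
    - fold M Nn. pose proof (HL s Hs).
      replace (M * (Rpower (A0 + s * (t / M)) (a - 2) * (t / M) ^ 2) + Nn * (Rpower (B0 - s * (t / Nn)) (a - 2) * (t / Nn) ^ 2))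
        with (t ^ 2 * (/ M * Rpower (A0 + s * (t / M)) (a - 2) + / Nn * Rpower (B0 - s * (t / Nn)) (a - 2))) by (field; lra).
      apply Rmult_le_compat_l; [apply pow2_ge_0|auto].
    - intros k Hk; unfold p, q; rewrite Hlt by auto. f_equal. f_equal. ring. f_equal. ring.
    - intros k Hk; unfold p, q; rewrite Hge by auto. f_equal. f_equal. ring. ring. }
  assert (0 < t ^ 2) by (apply pow_lt; lra).
  replace (C * (2 * t) ^ 2) with (t ^ 2 * (C * 4)) in H0 by ring.
  apply Rmult_le_reg_l with (t ^ 2); auto.
Qed.

Lemma le_eps C T : (forall eps, 0 < eps -> C <= T + eps) -> C <= T.
Proof.
  intros H. destruct (Rle_dec C T) as [|Hn]; auto.
  exfalso. pose proof (H ((C - T) / 2) ltac:(lra)). lra.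
Qed.

Lemma half_id a : 4 * Rpower 2 (1 - a) = 2 * Rpower (1 / 2) (a - 2).
Proof.
  assert (E1 : Rpower (1/2) (a - 2) = Rpower 2 (- (a - 2))).
  { unfold Rpower. f_equal. replace (1/2) with (/2) by field. rewrite ln_Rinv by lra. ring. }
  rewrite E1. replace 4 with (Rpower 2 2) by (rewrite Rpower_2; lra).
  assert (E3 : 2 * Rpower 2 (- (a - 2)) = Rpower 2 (1 + - (a - 2))) by (rewrite Rpower_plus, Rpower_1; lra).
  rewrite E3, <- Rpower_plus. f_equal. ring.
Qed.

Lemma opt_half a K C : negS_strongly_convex a K C -> (2 <= K)%nat ->
  C * 4 <= 2 * Rpower (1 / 2) (a - 2).
Proof.
  intros HS HK. apply le_eps. intros eps He.
  destruct (Rpower_cont (1/2) (a - 2) (eps / 2) ltac:(lra) ltac:(lra)) as [dl [Hdl Hc]].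
  set (d := Rmin dl (1/2)).
  assert (Hd1 : 0 < d) by (unfold d; apply Rmin_pos; lra).
  assert (Hd2 : d <= dl) by apply Rmin_l. assert (Hd3 : d <= 1/2) by apply Rmin_r.
  assert (HKp : 2 <= INR K) by (change 2 with (INR 2); apply le_INR; auto).
  set (eta := d / (4 * INR K)).
  assert (He1 : 0 < eta) by (unfold eta; apply Rdiv_lt_0_compat; lra).
  assert (He2 : eta * (INR K - 2) <= d / 4).
  { unfold eta. apply (Rmult_le_reg_r (4 * INR K)). lra. field_simplify; [|lra]. nra. }
  assert (He3 : eta <= d / 8).
  { unfold eta. apply (Rmult_le_reg_r (4 * INR K)). lra. field_simplify; [|lra]. nra. }
  assert (He4 : 0 <= eta * (INR K - 2)) by (apply Rmult_le_pos; lra).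
  set (h := (1 - eta * (INR K - 2)) / 2).
  set (t := d / 4).
  apply (config2 a K C h h eta t); auto.
  - unfold h. split; lra.
  - unfold h. split; lra.
  - intros; lra.
  - unfold h. field.
  - unfold t; lra.
  - unfold h, t. lra.
  - unfold h, t. lra.
  - intros s Hs.
    assert (0 <= s * t <= t) by (unfold t; split; [apply Rmult_le_pos; lra| nra]).
    assert (Rpower (h + s * t) (a - 2) < Rpower (1 / 2) (a - 2) + eps / 2).
    { apply Hc. apply Rabs_def1; unfold h, t in *; lra. }
    assert (Rpower (h - s * t) (a - 2) < Rpower (1 / 2) (a - 2) + eps / 2).
    { apply Hc. apply Rabs_def1; unfold h, t in *; lra. }
    lra.
Qed.

Lemma opt_le1 a K C : a <= 1 -> negS_strongly_convex a K C -> (2 <= K)%nat -> C <= C_const a K.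
Proof.
  intros Ha HS HK. pose proof (opt_half a K C HS HK). rewrite C_le1 by auto.
  rewrite <- half_id in H. lra.
Qed.

Lemma opt_K2_gt3 a C : 3 < a -> negS_strongly_convex a 2 C -> C <= C_const a 2.
Proof.
  intros Ha HS. pose proof (opt_half a 2 C HS ltac:(lia)). rewrite C_K2 by lra.
  rewrite Rmax_left by lra. rewrite <- half_id in H. lra.
Qed.

Lemma small_pow c eps : 0 < c -> 0 < eps -> exists y, 0 < y < 1 /\ Rpower y c <= eps.
Proof.
  intros Hc He. set (z := Rmin eps (1/2)).
  assert (Hz : 0 < z) by (unfold z; apply Rmin_pos; lra).
  assert (Hz1 : z <= eps) by apply Rmin_l. assert (Hz2 : z <= 1/2) by apply Rmin_r.
  exists (Rpower z (/ c)). split; [split|].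
  - apply Rpower_pos.
  - rewrite <- (Rpower_1_l (/ c)). apply Rlt_Rpower_l. apply Rinv_0_lt_compat; lra. lra.
  - rewrite Rpower_mult. replace (/ c * c) with 1 by (field; lra). rewrite Rpower_1; lra.
Qed.

Lemma opt_K2_le3 a C : 2 < a <= 3 -> negS_strongly_convex a 2 C -> C <= C_const a 2.
Proof.
  intros Ha HS. rewrite C_K2 by lra. rewrite Rmax_right by lra.
  replace (1 - 3) with (- 2) by ring. rewrite Rpower_m2 by lra.
  cut (C * 4 <= 1). { intros; lra. }
  apply le_eps. intros eps He.
  destruct (small_pow (a - 2) eps ltac:(lra) He) as [y [Hy Hpy]].
  set (eta := y / 3). set (t := eta / 2).
  apply (config2 a 2 C eta (1 - eta) 0 t); auto; unfold t, eta in *; try lra.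
  intros; lia.
  intros s Hs.
  assert (0 <= s * (y / 3 / 2) <= y / 3 / 2) by (split; [apply Rmult_le_pos; lra| nra]).
  assert (Rpower (y / 3 + s * (y / 3 / 2)) (a - 2) <= Rpower y (a - 2)) by (apply Rle_Rpower_l; lra).
  assert (Rpower (1 - y / 3 - s * (y / 3 / 2)) (a - 2) <= Rpower 1 (a - 2)) by (apply Rle_Rpower_l; lra).
  rewrite Rpower_1_l in H1. lra.
Qed.

Lemma opt_K3 a K C : 2 < a -> (3 <= K)%nat -> negS_strongly_convex a K C -> C <= C_const a K.
Proof.
  intros Ha HK HS. rewrite C_K3 by auto.
  cut (C * 4 <= 0). { intros; lra. }
  apply le_eps. intros eps He.
  destruct (small_pow (a - 2) (eps / 2) ltac:(lra) ltac:(lra)) as [y [Hy Hpy]].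
  assert (HKp : 3 <= INR K) by (replace 3 with (INR 3) by (cbn [INR]; ring); apply le_INR; auto).
  set (eta := y / 3). set (t := eta / 2).
  apply (config2 a K C eta eta ((1 - 2 * eta) / (INR K - 2)) t); auto; unfold t, eta in *; try lra.
  - lia.
  - intros. split. apply Rdiv_lt_0_compat; lra.
    apply (Rmult_lt_reg_r (INR K - 2)). lra. field_simplify; lra.
  - field. lra.
  - intros s Hs.
    assert (0 <= s * (y / 3 / 2) <= y / 3 / 2) by (split; [apply Rmult_le_pos; lra| nra]).
    assert (Rpower (y / 3 + s * (y / 3 / 2)) (a - 2) <= Rpower y (a - 2)) by (apply Rle_Rpower_l; lra).
    assert (Rpower (y / 3 - s * (y / 3 / 2)) (a - 2) <= Rpower y (a - 2)) by (apply Rle_Rpower_l; lra).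
    lra.
Qed.

Lemma block_id a M u S : 1 < a <= 2 -> 1 <= M -> 0 < u -> 0 < S -> u = Rpower M ((1 - a) / (3 - a)) ->
  / M * Rpower (u / S / M) (a - 2) = u / S * Rpower S (3 - a).
Proof.
  intros Ha HM Hu HS Eu.
  assert (HA : 0 < u / S) by (apply Rdiv_lt_0_compat; lra).
  assert (E1 : Rpower (u / S / M) (a - 2) = / Rpower (u / S / M) (2 - a))
    by (rewrite <- Rpower_Ropp; f_equal; ring).
  rewrite E1.
  replace (/ M * / Rpower (u / S / M) (2 - a)) with (1 / (M * Rpower (u / S / M) (2 - a)))
    by (field; split; [apply Rgt_not_eq, Rpower_pos|lra]).
  rewrite ident1 by lra.
  replace ((2 - a - 1) / (1 + (2 - a))) with ((1 - a) / (3 - a)) by (field; lra).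
  rewrite <- Eu. replace (u / (u / S)) with S by (field; lra).
  replace (1 + (2 - a)) with (3 - a) by ring. auto.
Qed.

Lemma opt_12 a K C : 1 < a <= 2 -> (2 <= K)%nat -> negS_strongly_convex a K C -> C <= C_const a K.
Proof.
  intros Ha HK HS.
  pose proof (half_bounds K) as [Hb1 Hb2].
  set (m := (K / 2)%nat).
  assert (Hm1 : (1 <= m)%nat) by (unfold m in *; lia).
  assert (HmK : (m < K)%nat) by (unfold m in *; lia).
  assert (HM : 1 <= INR m) by (apply (le_INR 1); lia).
  assert (HN : 1 <= INR K - INR m) by (rewrite <- minus_INR by lia; apply (le_INR 1); lia).
  set (e := (1 - a) / (3 - a)).
  set (u := Rpower (INR m) e). set (v := Rpower (INR K - INR m) e). set (S := u + v).
  assert (Hu : 0 < u) by apply Rpower_pos. assert (Hv : 0 < v) by apply Rpower_pos.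
  assert (HSp : 0 < S) by (unfold S; lra).
  set (A0 := u / S / INR m). set (B0 := v / S / (INR K - INR m)).
  set (T0 := / INR m * Rpower A0 (a - 2) + / (INR K - INR m) * Rpower B0 (a - 2)).
  assert (ET : T0 = 4 * C_const a K).
  { rewrite C_12 by auto. fold m e u v. unfold T0, A0, B0.
    rewrite (block_id a (INR m) u S), (block_id a (INR K - INR m) v S) by (auto; lra).
    unfold S in *. field. apply Rgt_not_eq; lra. }
  cut (C * 4 <= T0). { intros; lra. }
  assert (HuS : u / S < 1) by (apply (Rmult_lt_reg_r S); auto; unfold Rdiv; rewrite Rmult_assoc, Rinv_l by lra; unfold S; lra).
  assert (HvS : v / S < 1) by (apply (Rmult_lt_reg_r S); auto; unfold Rdiv; rewrite Rmult_assoc, Rinv_l by lra; unfold S; lra).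
  assert (HuS0 : 0 < u / S) by (apply Rdiv_lt_0_compat; lra).
  assert (HvS0 : 0 < v / S) by (apply Rdiv_lt_0_compat; lra).
  assert (HA0 : 0 < A0 <= u / S).
  { unfold A0. split. apply Rdiv_lt_0_compat; lra.
    unfold Rdiv at 1. rewrite <- (Rmult_1_r (u / S)) at 2. apply Rmult_le_compat_l. lra.
    rewrite <- Rinv_1. apply Rinv_le_contravar; lra. }
  assert (HB0 : 0 < B0 <= v / S).
  { unfold B0. split. apply Rdiv_lt_0_compat; lra.
    unfold Rdiv at 1. rewrite <- (Rmult_1_r (v / S)) at 2. apply Rmult_le_compat_l. lra.
    rewrite <- Rinv_1. apply Rinv_le_contravar; lra. }
  apply le_eps. intros eps He.
  destruct (Rpower_cont A0 (a - 2) (eps / 2) ltac:(lra) ltac:(lra)) as [d1 [Hd1 Hc1]].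
  destruct (Rpower_cont B0 (a - 2) (eps / 2) ltac:(lra) ltac:(lra)) as [d2 [Hd2 Hc2]].
  set (t := Rmin (Rmin d1 d2) (Rmin (1 - A0) B0) / 2).
  assert (Ht0 : 0 < t) by (unfold t; assert (0 < Rmin (Rmin d1 d2) (Rmin (1 - A0) B0)) by (repeat apply Rmin_pos; lra); lra).
  assert (Ht1 : t < d1) by (unfold t; pose proof (Rmin_l (Rmin d1 d2) (Rmin (1 - A0) B0)); pose proof (Rmin_l d1 d2); lra).
  assert (Ht2 : t < d2) by (unfold t; pose proof (Rmin_l (Rmin d1 d2) (Rmin (1 - A0) B0)); pose proof (Rmin_r d1 d2); lra).
  assert (Ht3 : t < 1 - A0) by (unfold t; pose proof (Rmin_r (Rmin d1 d2) (Rmin (1 - A0) B0)); pose proof (Rmin_l (1 - A0) B0); lra).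
  assert (Ht4 : t < B0) by (unfold t; pose proof (Rmin_r (Rmin d1 d2) (Rmin (1 - A0) B0)); pose proof (Rmin_r (1 - A0) B0); lra).
  assert (HtM : 0 < t / INR m <= t).
  { split. apply Rdiv_lt_0_compat; lra. unfold Rdiv. rewrite <- (Rmult_1_r t) at 2. apply Rmult_le_compat_l. lra.
    rewrite <- Rinv_1. apply Rinv_le_contravar; lra. }
  assert (HtN : 0 < t / (INR K - INR m) <= t).
  { split. apply Rdiv_lt_0_compat; lra. unfold Rdiv. rewrite <- (Rmult_1_r t) at 2. apply Rmult_le_compat_l. lra.
    rewrite <- Rinv_1. apply Rinv_le_contravar; lra. }
  assert (HiM : 0 < / INR m <= 1) by (split; [apply Rinv_0_lt_compat; lra| rewrite <- Rinv_1; apply Rinv_le_contravar; lra]).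
  assert (HiN : 0 < / (INR K - INR m) <= 1) by (split; [apply Rinv_0_lt_compat; lra| rewrite <- Rinv_1; apply Rinv_le_contravar; lra]).
  apply (config_block a K C m A0 B0 t); auto; try lra.
  - unfold A0, B0. field_simplify; try lra. unfold S. field. lra.
  - intros s Hs.
    assert (0 <= s * (t / INR m) <= t) by (split; [apply Rmult_le_pos; lra| nra]).
    assert (0 <= s * (t / (INR K - INR m)) <= t) by (split; [apply Rmult_le_pos; lra| nra]).
    assert (X1 : Rpower (A0 + s * (t / INR m)) (a - 2) < Rpower A0 (a - 2) + eps / 2) by (apply Hc1; apply Rabs_def1; lra).
    assert (X2 : Rpower (B0 - s * (t / (INR K - INR m))) (a - 2) < Rpower B0 (a - 2) + eps / 2) by (apply Hc2; apply Rabs_def1; lra).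
    apply Rlt_le in X1, X2. apply (Rmult_le_compat_l (/ INR m)) in X1; [|lra].
    apply (Rmult_le_compat_l (/ (INR K - INR m))) in X2; [|lra].
    assert (/ INR m * (eps / 2) <= eps / 2) by (rewrite <- (Rmult_1_l (eps / 2)) at 2; apply Rmult_le_compat_r; lra).
    assert (/ (INR K - INR m) * (eps / 2) <= eps / 2) by (rewrite <- (Rmult_1_l (eps / 2)) at 2; apply Rmult_le_compat_r; lra).
    unfold T0. lra.
Qed.

Theorem corollary1 (K : nat) (alpha : R) (HK : (2 <= K)%nat) :
  negS_strongly_convex alpha K (C_const alpha K) /\
  (forall C : R, negS_strongly_convex alpha K C -> C <= C_const alpha K).
Proof.
  split.
  - apply lower_from_QF.
    destruct (Rle_dec alpha 1). apply QF_le1; auto.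
    destruct (Rle_dec alpha 2). apply QF_12; auto; lra.
    destruct (Nat.eq_dec K 2). subst K. apply QF_K2; lra.
    apply QF_K3; [lra|lia].
  - intros C HS.
    destruct (Rle_dec alpha 1). apply opt_le1; auto.
    destruct (Rle_dec alpha 2). apply opt_12; auto; lra.
    destruct (Nat.eq_dec K 2). subst K.
    + destruct (Rle_dec alpha 3). apply opt_K2_le3; auto; lra. apply opt_K2_gt3; auto; lra.
    + apply opt_K3; auto; [lra|lia].
Qed.
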